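(* Let $\phi:(\mathcal S,E)\to(\mathcal S',E')$ be an isomorphism of information structures, let $Q$ and $Q'$ be adapted probability functors on $\mathcal S$ and $\mathcal S'$, and suppose $Q'_{\phi(X)}=m_X(Q_X)$ for every $X\in\mathrm{Ob}\,\mathcal S$. Then for every $\alpha>0$ the induced map $\phi^*:H^\bullet(\mathcal S',F_\alpha(Q'))\to H^\bullet(\mathcal S,F_\alpha(Q))$, given on cochains by $(\phi^*f)_Y[X_1|\dots|X_n](P)=f_{\phi(Y)}[\phi(X_1)|\dots|\phi(X_n)](m_Y(P))$, is an isomorphism.
   Context: An information structure is a pair $(\mathcal S,E)$ with $\mathcal S$ a small poset category with terminal object $\mathbf 1$ and finite-dimensional nerve, in which $XY:=X\wedge Y$ exists whenever $X,Y$ have a common refinement, and $E:\mathcal S\to\mathcal{Sets}$ a functor with $E(\mathbf 1)$ a singleton, $E(\pi)$ a strict surjection for non-identity $\pi$, $|E(\pi)^{-1}(x)\cap E(\sigma)^{-1}(y)|\le1$ for product diagrams $X\xleftarrow{\pi}X\wedge Y\xrightarrow{\sigma}Y$, and every $x\in E(X)$ the $X$-component of some element of $\lim E$. A morphism $\phi=(\phi_0,\phi^\#)$ is a functor $\phi_0$ (written $\phi$) preserving $\mathbf 1$ and existing products, with a natural transformation $\phi^\#:E\Rightarrow E'\circ\phi_0$ with surjective components; composition is componentwise, and an isomorphism is a morphism with a two-sided inverse. $\mathcal S_X=\{Y:X\to Y\}$. A probability functor $Q$ gives simplicial subcomplexes $Q_X$ of the simplex $\Delta(X)$ of laws on $E(X)$,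 with marginalization $\pi_*P(y)=\sum_{x\in E(\pi)^{-1}(y)}P(x)$; $Q$ adapted means stable under conditioning $P|_{Y=y}$ ($P|_{Y=y}(x)=P(x)/\pi_*P(y)$ if $E(\pi)(x)=y$, else $0$). $m_X(P)(x')=\sum_{x\in(\phi^\#_X)^{-1}(x')}P(x)$. $F_\alpha(Q_X)$: measurable functions on $Q_X$ with action $(Y.f)(P)=\sum_yP(Y=y)^\alpha f(P|_{Y=y})$. Cochains: families $f_X[X_1|\dots|X_n]$ of measurable functions on $Q_X$, $X_i\in\mathcal S_X$, jointly local ($f_X[\dots](P)=f_Y[\dots](\pi_*P)$ for $\pi:X\to Y$, $X_i\in\mathcal S_Y$), with coboundary $(\delta f)[X_1|\dots|X_{n+1}]=X_1.f[X_2|\dots|X_{n+1}]+\sum_{k=1}^n(-1)^kf[X_1|\dots|X_kX_{k+1}|\dots|X_{n+1}]+(-1)^{n+1}f[X_1|\dots|X_n]$; $H^\bullet(\mathcal S,F_\alpha(Q))$ is its cohomology (equal to $\mathrm{Ext}^\bullet(\mathbb R_{\mathcal S},F_\alpha(Q))$). *)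

(* Defs.v *)
From HB Require Import structures.
From mathcomp Require Import all_boot all_order all_algebra.
From mathcomp Require Import all_classical all_reals all_analysis.
Set Implicit Arguments. Unset Strict Implicit. Unset Printing Implicit Defensive.
Import Order.TTheory GRing.Theory Num.Theory.
Local Open Scope classical_set_scope.
Local Open Scope ring_scope.

(* A poset category S is given by its objects [Obj] and the (Prop-valued) *)
(* relation [arr X Y] = "there is a (necessarily unique) arrow X -> Y".   *)

(* strict chains X_0 -> X_1 -> ... -> X_k of non-identity arrows
   (= non-degenerate simplices of the nerve) *)
Fixpoint strict_chain (T : Type) (r : T -> T -> Prop) (s : seq T) : Prop :=
  match s with
  | x :: ((y :: _) as t) => r x y /\ x <> y /\ strict_chain r t
  | _ => True
  end.

Record infostr : Type := InfoStr {
  Obj : Type;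
  arr : Obj -> Obj -> Prop;
  arr_refl : forall X, arr X X;
  arr_trans : forall X Y Z, arr X Y -> arr Y Z -> arr X Z;
  arr_antisym : forall X Y, arr X Y -> arr Y X -> X = Y;
  one : Obj;
  arr_one : forall X, arr X one;
  nerve_fin : exists N : nat, forall s, strict_chain arr s -> (size s <= N)%N;
  (* the product X /\ Y (meaningful when X, Y have a common refinement) *)
  meet : Obj -> Obj -> Obj;
  meet_spec : forall X Y, (exists Z, arr Z X /\ arr Z Y) ->
      [/\ arr (meet X Y) X, arr (meet X Y) Y &
          forall W, arr W X -> arr W Y -> arr W (meet X Y)];
  E : Obj -> finType;
  Emap : forall X Y, arr X Y -> E X -> E Y;
  Emap_id : forall X (p : arr X X) (x : E X), Emap p x = x;
  Emap_comp : forall X Y Z (p : arr X Y) (q : arr Y Z) (r : arr X Z) (x : E X),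
      Emap r x = Emap q (Emap p x);
  E_one : #|E one| = 1%N;
  Emap_strict : forall X Y (p : arr X Y), X <> Y ->
      (forall y, exists x, Emap p x = y) /\ ~ injective (Emap p);
  E_prod : forall X Y, (exists Z, arr Z X /\ arr Z Y) ->
      forall (p : arr (meet X Y) X) (q : arr (meet X Y) Y) (z1 z2 : E (meet X Y)),
      Emap p z1 = Emap p z2 -> Emap q z1 = Emap q z2 -> z1 = z2;
  E_lim : forall X (x : E X), exists s : forall Y, E Y,
      (forall Y Z (p : arr Y Z), Emap p (s Y) = s Z) /\ s X = x
}.

Arguments one : clear implicits.
Arguments E : clear implicits.

Definition compat (S : infostr) (X Y : Obj S) := exists Z, arr Z X /\ arr Z Y.

Definition is_morphism (S S' : infostr) (f : Obj S -> Obj S')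
    (fs : forall X, E S X -> E S' (f X)) : Prop :=
  [/\ (forall X Y, arr X Y -> arr (f X) (f Y)),
      f (one S) = one S',
      (forall X Y, compat X Y -> f (meet X Y) = meet (f X) (f Y)),
      (forall X (x' : E S' (f X)), exists x, fs X x = x') &
      (forall X Y (p : arr X Y) (p' : arr (f X) (f Y)) (x : E S X),
          Emap p' (fs X x) = fs Y (Emap p x))].

(* isomorphisms: morphisms with a two-sided inverse (composition is
   componentwise; the sharp components are compared along the equality
   of objects g (f X) = X) *)
Definition is_iso (S S' : infostr) (f : Obj S -> Obj S')
    (fs : forall X, E S X -> E S' (f X)) : Prop :=
  is_morphism fs /\
  exists (g : Obj S' -> Obj S) (gs : forall X', E S' X' -> E S (g X')),
    is_morphism gs /\
    exists (H1 : forall X, g (f X) = X) (H2 : forall X', f (g X') = X'),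
      (forall X (x : E S X),
          eq_rect _ (fun Z => (E S Z : Type)) (gs (f X) (fs X x)) X (H1 X) = x) /\
      (forall X' (x' : E S' X'),
          eq_rect _ (fun Z => (E S' Z : Type)) (fs (g X') (gs X' x')) X' (H2 X') = x').

Section Prob.
Local Unset Implicit Arguments.
Variable R : realType.

Definition is_law {T : finType} (P : T -> R) : Prop :=
  (forall x, 0 <= P x) /\ \sum_(x : T) P x = 1.

Variable S : infostr.

Definition marg {X Y : Obj S} (p : arr X Y) (P : E S X -> R) (y : E S Y) : R :=
  \sum_(x : E S X | Emap p x == y) P x.

Definition cond {X Y : Obj S} (p : arr X Y) (P : E S X -> R) (y : E S Y)
    (x : E S X) : R :=
  if Emap p x == y then P x / marg p P y else 0.

(* Q_X is a simplicial subcomplex of Delta(X) (a union of closed faces),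
   and Q is functorial for marginalization *)
Definition prob_functor (Q : forall X : Obj S, set (E S X -> R)) : Prop :=
  [/\ (forall X P, Q X P -> is_law P),
      (forall X (P P' : E S X -> R), Q X P -> is_law P' ->
          (forall x, P x = 0 -> P' x = 0) -> Q X P') &
      (forall X Y (p : arr X Y) P, Q X P -> Q Y (marg p P))].

Definition adapted (Q : forall X : Obj S, set (E S X -> R)) : Prop :=
  forall X Y (p : arr X Y) P y, Q X P -> 0 < marg p P y -> Q X (cond p P y).

(* Borel sigma-algebra on R^T (T finite): generated by the coordinates *)
Definition coord_sets (T : finType) : set (set (T -> R)) :=
  [set A | exists (x : T) (B : set R), measurable B /\
           A = (fun P : T -> R => P x) @^-1` B].

Definition meas_on {T : finType} (Q : set (T -> R)) (f : (T -> R) -> R) : Prop :=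
  forall B : set R, measurable B -> <<s coord_sets T >> (Q `&` f @^-1` B).

(* A cochain is a family f X [X_1|...|X_n] P; only the values with        *)
(* X_i in S_X, size = n, P in Q_X matter.                                 *)
Definition cochain := forall X : Obj S, seq (Obj S) -> (E S X -> R) -> R.

Variable Q : forall X : Obj S, set (E S X -> R).
Variable alpha : R.

Definition dom (n : nat) (X : Obj S) (xs : seq (Obj S)) : Prop :=
  size xs = n /\ forall i, (i < size xs)%N -> arr X (nth (one S) xs i).

Definition is_cochain (n : nat) (f : cochain) : Prop :=
  (forall X xs, dom n X xs -> meas_on (Q X) (f X xs)) /\
  (forall X Y (p : arr X Y) xs, dom n Y xs ->
      forall P, Q X P -> f X xs P = f Y xs (marg p P)).

Definition act (X Y : Obj S) (g : (E S X -> R) -> R) (P : E S X -> R) : R :=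
  match pselect (arr X Y) with
  | left p => \sum_(y : E S Y) (marg p P y) `^ alpha * g (cond p P y)
  | right _ => 0
  end.

(* [X_1|...|X_k X_{k+1}|...] with 0-based k *)
Definition merge_at (k : nat) (xs : seq (Obj S)) : seq (Obj S) :=
  take k xs ++ meet (nth (one S) xs k) (nth (one S) xs k.+1) :: drop k.+2 xs.

Definition delta (n : nat) (f : cochain) : cochain :=
  fun X xs P =>
    act X (head (one S) xs) (f X (behead xs)) P
    + \sum_(k < n) (-1) ^+ k.+1 * f X (merge_at k xs) P
    + (-1) ^+ n.+1 * f X (take n xs) P.

Definition is_cocycle (n : nat) (f : cochain) : Prop :=
  is_cochain n f /\
  forall X xs, dom n.+1 X xs -> forall P, Q X P -> delta n f X xs P = 0.

Definition is_coboundary (n : nat) (h : cochain) : Prop :=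
  match n with
  | 0 => forall X xs, dom 0 X xs -> forall P, Q X P -> h X xs P = 0
  | m.+1 => exists g, is_cochain m g /\
      forall X xs, dom n X xs -> forall P, Q X P -> h X xs P = delta m g X xs P
  end.

End Prob.
Arguments marg {R S X Y}.
Arguments cond {R S X Y}.
Arguments prob_functor {R S}.
Arguments adapted {R S}.
Arguments cochain : clear implicits.
Arguments dom {S}.
Arguments is_cochain {R S}.
Arguments act {R S} alpha {X} Y.
Arguments merge_at {S}.
Arguments delta {R S} alpha n f.
Arguments is_cocycle {R S}.
Arguments is_coboundary {R S}.

Definition mpush (R : realType) (S S' : infostr) (f : Obj S -> Obj S')
    (fs : forall X, E S X -> E S' (f X)) (X : Obj S) (P : E S X -> R)
    (x' : E S' (f X)) : R :=
  \sum_(x : E S X | fs X x == x') P x.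

Definition pullback (R : realType) (S S' : infostr) (f : Obj S -> Obj S')
    (fs : forall X, E S X -> E S' (f X)) (c : cochain R S') : cochain R S :=
  fun Y xs P => c (f Y) (map f xs) (mpush fs (X:=Y) P).

Definition csub (R : realType) (S : infostr) (c d : cochain R S) : cochain R S :=
  fun X xs P => c X xs P - d X xs P.

(* Main.v *)
Require Import Defs.
From HB Require Import structures.
From mathcomp Require Import all_boot all_order all_algebra.
From mathcomp Require Import all_classical all_reals all_analysis.
Set Implicit Arguments. Unset Strict Implicit. Unset Printing Implicit Defensive.
Import Order.TTheory GRing.Theory Num.Theory.
Local Open Scope classical_set_scope.
Local Open Scope ring_scope.
Lemma sum_comp (R : realType) (A B C : finType) (f : A -> B) (g : B -> C)
  (P : A -> R) z :
  \sum_(b | g b == z) \sum_(a | f a == b) P a = \sum_(a | g (f a) == z) P a.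
Proof.
rewrite [RHS](partition_big f (fun b => g b == z)) //.
apply: eq_bigr => b /eqP gb; apply: eq_bigl => a.
by case: (f a =P b) => [fab|]; rewrite ?andbF ?andbT // fab gb eqxx.
Qed.

Lemma mpush_at (R : realType) (S S' : infostr) (f : Obj S -> Obj S')
  (fs : forall X, E S X -> E S' (f X)) X (P : E S X -> R) x :
  injective (fs X) -> mpush fs P (fs X x) = P x.
Proof.
move=> inj; rewrite /mpush (eq_bigl (pred1 x)) ?big_pred1_eq // => y.
by rewrite /= (inj_eq inj).
Qed.

Lemma mpush_inj (R : realType) (S S' : infostr) (f : Obj S -> Obj S')
  (fs : forall X, E S X -> E S' (f X)) X (P P0 : E S X -> R) :
  injective (fs X) -> mpush fs P = mpush fs P0 -> P = P0.
Proof.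
move=> inj e; apply: funext => x.
by rewrite -(mpush_at P x inj) -(mpush_at P0 x inj) e.
Qed.

Lemma marg_push (R : realType) (S S' : infostr) (f : Obj S -> Obj S')
  (fs : forall X, E S X -> E S' (f X)) X Y (p : arr X Y) (p' : arr (f X) (f Y))
  (P : E S X -> R) :
  (forall x, Emap p' (fs X x) = fs Y (Emap p x)) ->
  marg p' (mpush fs P) = mpush fs (marg p P).
Proof.
move=> nat; apply: funext => y'.
rewrite /marg /mpush sum_comp.
have := sum_comp (Emap p) (fs Y) P y'.
rewrite /= => ->; apply: eq_bigl => x; by rewrite nat.
Qed.

Lemma cond_push (R : realType) (S S' : infostr) (f : Obj S -> Obj S')
  (fs : forall X, E S X -> E S' (f X)) X Y (p : arr X Y) (p' : arr (f X) (f Y))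
  (P : E S X -> R) y :
  (forall x, Emap p' (fs X x) = fs Y (Emap p x)) ->
  injective (fs X) -> injective (fs Y) ->
  (forall x', exists x, fs X x = x') ->
  cond p' (mpush fs P) (fs Y y) = mpush fs (cond p P y).
Proof.
move=> nat injX injY surj; apply: funext => x'.
have [x <-] := surj x'.
rewrite mpush_at // /cond nat (inj_eq injY) mpush_at //.
by rewrite (marg_push _ nat) mpush_at.
Qed.

Lemma transp (R : realType) (S : infostr) (A : Type)
  (c : forall X : Obj S, seq (Obj S) -> (E S X -> R) -> A) Z Y (e : Z = Y)
  (k : E S Y -> E S Z)
  (ek : forall x, eq_rect _ (fun Z => (E S Z : Type)) (k x) Y e = x) xs
  (P : E S Y -> R) :
  c Z xs (fun z => \sum_(x | k x == z) P x) = c Y xs P.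
Proof.
subst Y => /=.
have -> : (fun z => \sum_(x | k x == z) P x) = P; last by [].
apply: funext => z; rewrite (eq_bigl (pred1 z)) ?big_pred1_eq // => x.
have ek' : forall x, k x = x := ek.
by rewrite /= ek'.
Qed.

Lemma roundtrip (R : realType) (S S' : infostr) (f : Obj S -> Obj S')
  (fs : forall X, E S X -> E S' (f X)) (g : Obj S' -> Obj S)
  (gs : forall X', E S' X' -> E S (g X'))
  (H1 : forall X, g (f X) = X)
  (eq1 : forall X (x : E S X),
      eq_rect _ (fun Z => (E S Z : Type)) (gs (f X) (fs X x)) X (H1 X) = x)
  (A : Type) (c : forall X : Obj S, seq (Obj S) -> (E S X -> R) -> A)
  Y xs (P : E S Y -> R) :
  c (g (f Y)) (map g (map f xs)) (mpush gs (mpush fs P)) = c Y xs P.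
Proof.
have -> : map g (map f xs) = xs.
  by elim: xs => //= x xs ->; rewrite H1.
have -> : mpush gs (mpush fs P) = fun z => \sum_(x | gs _ (fs Y x) == z) P x.
  by apply: funext => z; rewrite /mpush sum_comp.
exact: (@transp R S A c _ _ (H1 Y) _ (eq1 Y) xs P).
Qed.

Lemma meas_pre (R : realType) (T T' : finType) (m : (T -> R) -> (T' -> R))
  (hm : forall x', exists x, forall P, m P x' = P x) (A : set (T' -> R)) :
  <<s coord_sets R T' >> A -> <<s coord_sets R T >> (m @^-1` A).
Proof.
pose C := [set B | <<s coord_sets R T >> (m @^-1` B)].
suff : <<s coord_sets R T' >> `<=` C by apply.
apply: smallest_sub.
  split.
  - by rewrite /C /= preimage_set0; exact: sigma_algebra0.
  - move=> B hB; rewrite /C /=.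
    have -> : m @^-1` (setT `\` B) = setT `\` m @^-1` B.
      by apply/seteqP; split => x /=.
    exact: sigma_algebraCD.
  - move=> F hF; rewrite /C /= preimage_bigcup.
    exact: sigma_algebra_bigcup.
move=> B [x' [Bs [mB ->]]].
have [x hx] := hm x'.
rewrite /C /=.
have -> : m @^-1` ((fun P => P x') @^-1` Bs) = (fun P => P x) @^-1` Bs.
  by apply/seteqP; split => P /=; rewrite hx.
by apply: sub_sigma_algebra; exists x, Bs.
Qed.

Lemma dom_map (S S' : infostr) (f : Obj S -> Obj S')
  (harr : forall X Y, arr X Y -> arr (f X) (f Y)) n X xs :
  dom n X xs -> dom n (f X) (map f xs).
Proof.
move=> [sz hn]; split; first by rewrite size_map.
move=> i; rewrite size_map => hi; rewrite (nth_map (Defs.one S)) //.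
exact: harr (hn i hi).
Qed.

Lemma merge_map (S S' : infostr) (f : Obj S -> Obj S')
  (hmeet : forall X Y, compat X Y -> f (meet X Y) = meet (f X) (f Y))
  X zs k :
  (forall i, (i < size zs)%N -> arr X (nth (Defs.one S) zs i)) ->
  (k.+1 < size zs)%N ->
  map f (merge_at k zs) = merge_at k (map f zs).
Proof.
move=> hd hk; rewrite /merge_at map_cat map_take /= map_drop.
rewrite (nth_map (Defs.one S)) ?(nth_map (Defs.one S)) //; last by apply: ltnW.
rewrite hmeet //; exists X; split; apply: hd => //; exact: ltnW.
Qed.

Lemma fs_bij (S S' : infostr) (f : Obj S -> Obj S')
  (fs : forall X, E S X -> E S' (f X)) Y :
  injective (fs Y) -> (forall y', exists y, fs Y y = y') -> bijective (fs Y).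
Proof.
move=> inj surj.
have [h hh] := choice surj.
exists h => // y; apply: inj; exact: hh.
Qed.

Lemma pull_cochain (R : realType) (S S' : infostr) (f : Obj S -> Obj S')
  (fs : forall X, E S X -> E S' (f X))
  (Q : forall X : Obj S, set (E S X -> R))
  (Q' : forall X' : Obj S', set (E S' X' -> R))
  (Hm : is_morphism fs) (inj : forall X, injective (fs X))
  (HQ : forall X P, Q X P <-> Q' (f X) (mpush fs P)) n c :
  is_cochain Q' n c -> is_cochain Q n (pullback fs c).
Proof.
case: Hm => harr hone hmeet hsurj hnat.
move=> [hmeas hloc]; split.
- move=> X xs hd B mB.
  have h := hmeas _ _ (dom_map harr hd) B mB.
  have hm : forall x' : E S' (f X), exists x : E S X, forall P : E S X -> R, mpush fs P x' = P x.
    move=> x'; have [x <-] := hsurj X x'; exists x => P; exact: mpush_at.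
  have := meas_pre hm h.
  congr (<<s _ >> _); apply/seteqP; split => P /= [hq hb]; split => //.
    by apply/HQ.
  by apply/HQ.
- move=> X Y p xs hd P hq; rewrite /pullback.
  have p' := harr _ _ p.
  rewrite (hloc _ _ p' _ (dom_map harr hd) _ (proj1 (HQ _ _) hq)).
  by rewrite (marg_push _ (fun x => hnat _ _ p p' x)).
Qed.

Lemma pull_delta (R : realType) (S S' : infostr) (f : Obj S -> Obj S')
  (fs : forall X, E S X -> E S' (f X))
  (Hm : is_morphism fs) (inj : forall X, injective (fs X))
  (alpha : R) n (c : cochain R S') X xs (P : E S X -> R) :
  dom n.+1 X xs ->
  delta alpha n (pullback fs c) X xs P = pullback fs (delta alpha n c) (X:=X) xs P.
Proof.
case: Hm => harr hone hmeet hsurj hnat.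
move=> [sz hd]; rewrite /delta /pullback.
congr (_ + _ + _).
- case: xs sz hd => // Y ys /= [sz] hd.
  rewrite /act.
  have pY : arr X Y := hd 0%N isT.
  case: pselect => [p|] //.
  case: pselect => [p'|np']; last by exfalso; apply: np'; exact: harr.
  rewrite [RHS](reindex (fs Y)) /=; last first.
    by apply: onW_bij; apply: fs_bij => //; exact: hsurj.
  apply: eq_bigr => y _.
  have nat := fun x => hnat _ _ p p' x.
  rewrite (marg_push _ nat) mpush_at //.
  by rewrite (cond_push _ _ nat).
- apply: eq_bigr => k _; congr (_ * c _ _ _).
  apply: merge_map => //; first exact: hd.
  by rewrite sz ltnS.
- by rewrite map_take.
Qed.

Lemma pull_cocycle (R : realType) (S S' : infostr) (f : Obj S -> Obj S')
  (fs : forall X, E S X -> E S' (f X))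
  (Q : forall X : Obj S, set (E S X -> R))
  (Q' : forall X' : Obj S', set (E S' X' -> R))
  (Hm : is_morphism fs) (inj : forall X, injective (fs X))
  (HQ : forall X P, Q X P <-> Q' (f X) (mpush fs P)) alpha n c :
  is_cocycle Q' alpha n c -> is_cocycle Q alpha n (pullback fs c).
Proof.
move=> [hc hd]; split; first exact: pull_cochain.
move=> X xs hx P hq; rewrite pull_delta // /pullback.
case: Hm => harr _ _ _ _.
apply: hd; [exact: dom_map | by apply/HQ].
Qed.

Lemma pull_coboundary (R : realType) (S S' : infostr) (f : Obj S -> Obj S')
  (fs : forall X, E S X -> E S' (f X))
  (Q : forall X : Obj S, set (E S X -> R))
  (Q' : forall X' : Obj S', set (E S' X' -> R))
  (Hm : is_morphism fs) (inj : forall X, injective (fs X))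
  (HQ : forall X P, Q X P <-> Q' (f X) (mpush fs P)) alpha n c :
  is_coboundary Q' alpha n c -> is_coboundary Q alpha n (pullback fs c).
Proof.
have harr : forall X Y, arr X Y -> arr (f X) (f Y) by case: Hm.
case: n => [|m] /=.
  move=> h X xs hd P hq; rewrite /pullback.
  by apply: h; [exact: dom_map | apply/HQ].
move=> [g [hg he]]; exists (pullback fs g); split.
  exact: (pull_cochain Hm inj HQ).
move=> X xs hd P hq; rewrite pull_delta // /pullback.
by apply: he; [exact: dom_map | apply/HQ].
Qed.

Theorem corollary4p4 (R : realType) (S S' : infostr)
    (phi : Obj S -> Obj S') (phis : forall X, E S X -> E S' (phi X))
    (Q : forall X : Obj S, set (E S X -> R))
    (Q' : forall X' : Obj S', set (E S' X' -> R)) :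
  is_iso phis ->
  prob_functor Q -> adapted Q ->
  prob_functor Q' -> adapted Q' ->
  (forall X : Obj S, Q' (phi X) = @mpush R _ _ _ phis X @` Q X) ->
  forall alpha : R, 0 < alpha ->
  forall n : nat,
    (* phi^* is well defined on H^n: cocycles to cocycles, coboundaries to coboundaries *)
    (forall f, is_cocycle Q' alpha n f -> is_cocycle Q alpha n (pullback phis f)) /\
    (forall f, is_cocycle Q' alpha n f -> is_coboundary Q' alpha n f ->
        is_coboundary Q alpha n (pullback phis f)) /\
    (* injective on H^n *)
    (forall f, is_cocycle Q' alpha n f ->
        is_coboundary Q alpha n (pullback phis f) -> is_coboundary Q' alpha n f) /\
    (* surjective on H^n *)
    (forall g, is_cocycle Q alpha n g ->
        exists f, is_cocycle Q' alpha n f /\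
          is_coboundary Q alpha n (csub g (pullback phis f))).
Proof.
move=> [Hm [g0 [gs [Hm' [H1 [H2 [eq1 eq2]]]]]]] _ _ _ _ HQ alpha _ n.
have injf : forall X, injective (phis X).
  by move=> X x1 x2 e; rewrite -[LHS](eq1 X x1) -[RHS](eq1 X x2) e.
have injg : forall X, injective (gs X).
  by move=> X x1 x2 e; rewrite -[LHS](eq2 X x1) -[RHS](eq2 X x2) e.
have HQ1 : forall X P, Q X P <-> Q' (phi X) (mpush phis P).
  move=> X P; rewrite HQ; split; first by exists P.
  by move=> [P0 hP0 e]; rewrite -(mpush_inj (injf X) e).
have HQ2 : forall X' P', Q' X' P' <-> Q (g0 X') (mpush gs P').
  move=> X' P'.
  have e : Q' (phi (g0 X')) (mpush phis (mpush gs P')) = Q' X' P' :=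
    @roundtrip R S' S g0 gs phi phis H2 eq2 Prop (fun X _ P => Q' X P) X' [::] P'.
  split.
  - move=> h.
    have : Q' (phi (g0 X')) (mpush phis (mpush gs P')) by rewrite e.
    rewrite HQ => -[P0 hP0 eP].
    by rewrite -(mpush_inj (injf _) eP).
  - by move=> h; rewrite -e; apply/HQ1.
have back1 : forall c : cochain R S, pullback phis (pullback gs c) = c.
  move=> c; apply: functional_extensionality_dep => Y.
  apply: funext => xs; apply: funext => P.
  exact: (@roundtrip R S S' phi phis g0 gs H1 eq1 R c Y xs P).
have back2 : forall c : cochain R S', pullback gs (pullback phis c) = c.
  move=> c; apply: functional_extensionality_dep => Y.
  apply: funext => xs; apply: funext => P.
  exact: (@roundtrip R S' S g0 gs phi phis H2 eq2 R c Y xs P).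
split; first exact: (pull_cocycle Hm injf HQ1).
split; first by move=> f _; exact: (pull_coboundary Hm injf HQ1).
split.
  move=> f _ h; rewrite -(back2 f); exact: (pull_coboundary Hm' injg HQ2).
move=> g hg; exists (pullback gs g); split.
  exact: (pull_cocycle Hm' injg HQ2).
rewrite back1.
case: n hg => [|m] hg /=.
  by move=> X xs _ P _; rewrite /csub subrr.
exists (fun _ _ _ => 0); split.
  split => //.
  move=> X xs _ B mB.
  have hQX : <<s coord_sets R (E S X) >> (Q X).
    have hd : dom m.+1 X (nseq m.+1 X).
      split; first by rewrite size_nseq.
      by move=> i; rewrite size_nseq => hi; rewrite nth_nseq hi; apply: arr_refl.
    have := hg.1.1 X _ hd setT measurableT.
    by rewrite preimage_setT setIT.
  have [hB|hB] := pselect (B 0).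
    have -> : Q X `&` (fun _ => 0) @^-1` B = Q X.
      by apply/seteqP; split => P /= => [[]|] .
    exact: hQX.
  have -> : Q X `&` (fun _ => 0) @^-1` B = set0.
    by apply/seteqP; split => P //= [].
  exact: sigma_algebra0.
move=> X xs _ P _; rewrite /csub subrr /delta.
have -> : act alpha (head (Defs.one S) xs) (fun _ => 0) P = 0.
  rewrite /act; case: pselect => // p.
  by apply: big1 => y _; rewrite mulr0.
by rewrite big1 ?mulr0 ?addr0 // => k _; rewrite mulr0.
Qed.
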